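(* Let $\psi\colon\mathbb R^2\to\mathbb R$ be smooth and $p_\ast\in\mathbb R^2$ be such that conditions 1–7 below hold with $N=2$. Let $\Omega>0$, $\alpha,c>0$, $\varpi\in\mathbb N$, $\mathsf X:=\mathbb R^2\times\mathbb S^1\subset\mathbb R^4$. For $\varepsilon>0$ let $V_\varepsilon([p,o]):=y_\ast-\psi(p)+\varepsilon\langle\nabla\psi(p),o-o_\perp\rangle^2$, and for $a>0$, $w\in\mathbb R$ let $\bar\Sigma^a_{\mathsf X}([p,o],w):=\big((\tfrac{\alpha c}2\langle\nabla\psi(p),o\rangle+a\phi^a([p,o])+w)\,o,\ \Omega o_\perp\big)$ with $\phi^a([p,o]):=\frac1{2\pi}\int_0^{2\pi}\int_0^1(1-s)U(\tau)^2v(\tau)\langle\nabla^2\psi(p+asU(\tau)o)o,o\rangle\,\mathrm ds\,\mathrm d\tau$, $U(\tau):=\alpha\sin(\varpi\tau)$, $v(\tau):=c\sin(\varpi\tau)$. Let $(\bar\Sigma^a_{\mathsf X}V_\varepsilon)(x,w)$ denote the Lie derivative of $V_\varepsilon$ along $x\mapsto\bar\Sigma^a_{\mathsf X}(x,w)$. Then there exists $\varepsilon_2>0$ such that $(\bar\Sigma^a_{\mathsf X}V_\varepsilon)(x,w)\le\big(2a|\phi^a(x)|+2|w|-\varepsilon\Omega|\nabla\psi(p)|\big)|\nabla\psi(p)|$ for every $\varepsilon\in(0,\varepsilon_2)$, every $a>0$, every $w\in\mathbb R$ and every $x=[p,o]\in\mathsf X$.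
   Context: $\mathbb S^1$ is the unit circle in $\mathbb R^2$; for $o\in\mathbb S^1$, $o_\perp\in\mathbb S^1$ is the unique element with $(o,o_\perp)$ a positively oriented orthonormal basis of $\mathbb R^2$. Notation: $y_\ast:=\psi(p_\ast)$, $\underline y:=\inf\psi\in\mathbb R\cup\{-\infty\}$, $|\nabla^2\psi(p)|$ operator norm, $\psi^{-1}(\ge y):=\{p:\psi(p)\ge y\}$. Conditions: (1) $\psi(p)<y_\ast$ for $p\ne p_\ast$; (2) $\nabla^2\psi(p_\ast)$ negative definite; (3) there is $r_1>0$ with $\psi(p_\ast+v)=\psi(p_\ast-v)$ for $|v|\le r_1$; (4) there is $c_1>0$ with $|\nabla^2\psi(p)|\le c_1$ for all $p$; (5) $\nabla\psi(p)\ne0$ for $p\ne p_\ast$; (6) for every $y\in(\underline y,y_\ast)$, $\psi^{-1}(\ge y)$ is compact; (7) there are $c_2,r_2,r_3>0$ with $|\nabla^2\psi(p+v)|\le c_2|\nabla\psi(p)|$ for all $|p-p_\ast|\ge r_2$, $|v|\le r_3$. *)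

(* Defs.v *)
From Stdlib Require Import Reals List.
From Coquelicot Require Import Coquelicot.
Open Scope R_scope.

Definition dot (u v : R * R) : R := fst u * fst v + snd u * snd v.
Definition vnorm (u : R * R) : R := sqrt (dot u u).
Definition vadd (u v : R * R) : R * R := (fst u + fst v, snd u + snd v).
Definition vsub (u v : R * R) : R * R := (fst u - fst v, snd u - snd v).
Definition vscal (k : R) (u : R * R) : R * R := (k * fst u, k * snd u).

(* o_perp: the unique unit vector with (o, o_perp) positively oriented
   orthonormal; for o = (o1,o2) in S^1 this is (-o2, o1). *)
Definition perp (o : R * R) : R * R := (- snd o, fst o).
Definition in_S1 (o : R * R) : Prop := fst o ^ 2 + snd o ^ 2 = 1.

Definition d1 (f : R * R -> R) : R * R -> R :=
  fun p => Derive (fun t => f (t, snd p)) (fst p).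
Definition d2 (f : R * R -> R) : R * R -> R :=
  fun p => Derive (fun t => f (fst p, t)) (snd p).

Fixpoint Ck (k : nat) (f : R * R -> R) : Prop :=
  match k with
  | O => forall p, continuous f p
  | S k' => (forall p, continuous f p) /\
            (forall p, ex_derive (fun t => f (t, snd p)) (fst p) /\
                       ex_derive (fun t => f (fst p, t)) (snd p)) /\
            Ck k' (d1 f) /\ Ck k' (d2 f)
  end.
Definition smooth (f : R * R -> R) : Prop := forall k, Ck k f.

Definition grad (f : R * R -> R) (p : R * R) : R * R := (d1 f p, d2 f p).

Definition hess (f : R * R -> R) (p : R * R) (v : R * R) : R * R :=
  (d1 (d1 f) p * fst v + d2 (d1 f) p * snd v,
   d1 (d2 f) p * fst v + d2 (d2 f) p * snd v).

(* "operator norm of the linear map A is <= c", i.e.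
   sup_{|v| <= 1} |A v| <= c (literal unfolding of sup <= c). *)
Definition opnorm_le (A : R * R -> R * R) (c : R) : Prop :=
  forall v, vnorm v <= 1 -> vnorm (A v) <= c.

Definition neg_definite (A : R * R -> R * R) : Prop :=
  forall v, v <> (0, 0) -> dot (A v) v < 0.

Definition compact2 (K : R * R -> Prop) : Prop :=
  forall (I : Type) (U : I -> R * R -> Prop),
    (forall i, open (U i)) ->
    (forall x, K x -> exists i, U i x) ->
    exists l : list I, forall x, K x -> exists i, In i l /\ U i x.

Definition inf_psi (psi : R * R -> R) : Rbar :=
  Glb_Rbar (fun z => exists p, z = psi p).

Definition conditions (psi : R * R -> R) (pst : R * R) : Prop :=
  (forall p, p <> pst -> psi p < psi pst) /\
  neg_definite (hess psi pst) /\
  (exists r1, 0 < r1 /\ forall v, vnorm v <= r1 ->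
      psi (vadd pst v) = psi (vsub pst v)) /\
  (exists c1, 0 < c1 /\ forall p, opnorm_le (hess psi p) c1) /\
  (forall p, p <> pst -> grad psi p <> (0, 0)) /\
  (forall y, Rbar_lt (inf_psi psi) y -> y < psi pst ->
      compact2 (fun p => psi p >= y)) /\
  (exists c2 r2 r3, 0 < c2 /\ 0 < r2 /\ 0 < r3 /\
     forall p v, vnorm (vsub p pst) >= r2 -> vnorm v <= r3 ->
       opnorm_le (hess psi (vadd p v)) (c2 * vnorm (grad psi p))).

Definition phi (psi : R * R -> R) (alpha c : R) (varpi : nat) (a : R)
    (p o : R * R) : R :=
  let U := fun tau => alpha * sin (INR varpi * tau) in
  let v := fun tau => c * sin (INR varpi * tau) in
  / (2 * PI) *
  RInt (fun tau =>
    RInt (fun s =>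
      (1 - s) * (U tau) ^ 2 * v tau *
      dot (hess psi (vadd p (vscal (a * s * U tau) o)) o) o) 0 1)
    0 (2 * PI).

(* V_eps, extended to all of R^2 x R^2 (o_perp extended linearly). *)
Definition Veps (psi : R * R -> R) (yst eps : R) (x : (R * R) * (R * R)) : R :=
  let (p, o) := x in
  yst - psi p + eps * (dot (grad psi p) (vsub o (perp o))) ^ 2.

Definition Sigma (psi : R * R -> R) (Om alpha c : R) (varpi : nat) (a w : R)
    (x : (R * R) * (R * R)) : (R * R) * (R * R) :=
  let (p, o) := x in
  (vscal (alpha * c / 2 * dot (grad psi p) o + a * phi psi alpha c varpi a p o + w) o,
   vscal Om (perp o)).

Definition lie (F : (R * R) * (R * R) -> R)
    (X : (R * R) * (R * R) -> (R * R) * (R * R)) (x : (R * R) * (R * R)) : R :=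
  let (p, o) := x in
  let (dp, do_) := X x in
  Derive (fun t => F (vadd p (vscal t dp), vadd o (vscal t do_))) 0.

(* Main.v *)
Require Import Defs.
From Stdlib Require Import Reals.
From Coquelicot Require Import Coquelicot.
From Stdlib Require Import Lra Psatz.
Open Scope R_scope.

Lemma cont_2d (f : R * R -> R) x y : continuous f (x, y) ->
  continuity_2d_pt (fun u v => f (u, v)) x y.
Proof.
  intros H. apply continuity_2d_pt_filterlim.
  eapply filterlim_ext; [|exact H].
  intros [a b]; reflexivity.
Qed.

Lemma Ck_ex_diff k : forall f : R * R -> R, Ck k f ->
  forall x y, ex_diff_n (fun u v => f (u, v)) k x y.
Proof.
  induction k as [|k IH]; intros f H x y.
  - simpl. split; [apply cont_2d, H | exact I].
  - destruct H as [Hc [Hd [H1 H2]]]. simpl. split; [apply cont_2d, Hc|].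
    split; [exact (proj1 (Hd (x, y)))|].
    split; [exact (proj2 (Hd (x, y)))|].
    split; [exact (IH _ H1 x y) | exact (IH _ H2 x y)].
Qed.

Lemma diff_lim (f : R * R -> R) : Ck 2 f -> forall x y,
  differentiable_pt_lim (fun u v => f (u, v)) x y (Defs.d1 f (x, y)) (Defs.d2 f (x, y)).
Proof.
  intros H x y.
  destruct (Taylor_Lagrange_2d (fun u v => f (u, v)) 1 x y) as [D [d Hd]].
  { exists (mkposreal 1 Rlt_0_1). intros; apply (Ck_ex_diff 2 f H). }
  intros eps.
  assert (HD : 0 < Rabs D + 1) by (pose proof (Rabs_pos D); lra).
  exists (mkposreal (Rmin d (eps / (Rabs D + 1)))
     (Rmin_pos _ _ (cond_pos d) (Rdiv_lt_0_compat _ _ (cond_pos eps) HD))).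
  intros u v Hu Hv. simpl in Hu, Hv.
  assert (Hu1 := Rlt_le_trans _ _ _ Hu (Rmin_l _ _)).
  assert (Hv1 := Rlt_le_trans _ _ _ Hv (Rmin_l _ _)).
  assert (Hu2 := Rlt_le_trans _ _ _ Hu (Rmin_r _ _)).
  assert (Hv2 := Rlt_le_trans _ _ _ Hv (Rmin_r _ _)).
  specialize (Hd u v Hu1 Hv1).
  unfold DL_pol, differential, partial_derive in Hd. simpl in Hd.
  unfold C in Hd. simpl in Hd.
  set (M := Rmax (Rabs (u - x)) (Rabs (v - y))) in *.
  assert (HM0 : 0 <= M) by (unfold M; eapply Rle_trans; [apply Rabs_pos| apply Rmax_l]).
  assert (HM : M < eps / (Rabs D + 1)) by (unfold M; apply Rmax_lub_lt; auto).
  assert (HM' : M * (Rabs D + 1) <= eps).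
  { apply Rlt_le. apply (Rmult_lt_compat_r (Rabs D + 1)) in HM; auto.
    unfold Rdiv in HM. rewrite Rmult_assoc, Rinv_l in HM by lra. lra. }
  unfold Defs.d1, Defs.d2; simpl.
  assert (C00 : Binomial.C 0 0 = 1) by (unfold Binomial.C; simpl; field).
  assert (C10 : Binomial.C 1 0 = 1) by (unfold Binomial.C; simpl; field).
  assert (C11 : Binomial.C 1 1 = 1) by (unfold Binomial.C; simpl; field).
  rewrite C00, C10, C11 in Hd.
  match type of Hd with Rabs ?a <= _ => replace a with
    (f (u, v) - f (x, y) - (Derive (fun t => f (t, y)) x * (u - x) + Derive (fun t => f (x, t)) y * (v - y))) in Hd by field end.
  eapply Rle_trans; [apply Hd|].
  pose proof (Rle_abs D). pose proof (Rabs_pos D).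
  assert (D * (M * (M * 1)) <= M * (Rabs D + 1) * M) by nra. nra.
Qed.

Lemma line_der (f : R * R -> R) : Ck 2 f -> forall p w,
  is_derive (fun t => f (vadd p (vscal t w))) 0
    (Defs.d1 f p * fst w + Defs.d2 f p * snd w).
Proof.
  intros H [p1 p2] [w1 w2]. apply is_derive_Reals.
  unfold vadd, vscal; simpl.
  pose proof (derivable_pt_lim_comp_2d (fun u v => f (u, v))
     (fun t => p1 + t * w1) (fun t => p2 + t * w2) 0
     (Defs.d1 f (p1 + 0 * w1, p2 + 0 * w2)) (Defs.d2 f (p1 + 0 * w1, p2 + 0 * w2)) w1 w2) as K.
  replace (p1 + 0 * w1) with p1 in K by ring.
  replace (p2 + 0 * w2) with p2 in K by ring.
  apply K.
  - replace (p1 + 0 * w1) with p1 by ring.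
    replace (p2 + 0 * w2) with p2 by ring.
    exact (diff_lim f H p1 p2).
  - apply is_derive_Reals. auto_derive; auto; ring.
  - apply is_derive_Reals. auto_derive; auto; ring.
Qed.

Lemma D_plus f g x a b : is_derive f x a -> is_derive g x b ->
  is_derive (fun t => f t + g t) x (a + b).
Proof. intros H1 H2. exact (is_derive_plus f g x a b H1 H2). Qed.
Lemma D_minus f g x a b : is_derive f x a -> is_derive g x b ->
  is_derive (fun t => f t - g t) x (a - b).
Proof. intros H1 H2. exact (is_derive_minus f g x a b H1 H2). Qed.
Lemma D_mult f g x a b : is_derive f x a -> is_derive g x b ->
  is_derive (fun t => f t * g t) x (a * g x + f x * b).
Proof. intros H1 H2. exact (is_derive_mult f g x a b H1 H2 Rmult_comm). Qed.
Lemma D_const (k x : R) : is_derive (fun _ => k) x 0.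
Proof. exact (is_derive_const k x). Qed.
Lemma D_lin (k m x : R) : is_derive (fun t => k + t * m) x m.
Proof. apply is_derive_Reals. auto_derive; auto; ring. Qed.

Lemma is_derive_val (f : R -> R) x l l' : is_derive f x l -> l = l' -> is_derive f x l'.
Proof. intros H <-; exact H. Qed.

Lemma Veps_der psi yst eps lam Om p o : smooth psi ->
  let g1 := Defs.d1 psi p in let g2 := Defs.d2 psi p in
  let h1 := Defs.d1 (Defs.d1 psi) p * fst o + Defs.d2 (Defs.d1 psi) p * snd o in
  let h2 := Defs.d1 (Defs.d2 psi) p * fst o + Defs.d2 (Defs.d2 psi) p * snd o in
  let o1 := fst o in let o2 := snd o in
  Derive (fun t => Veps psi yst eps (vadd p (vscal t (vscal lam o)), vadd o (vscal t (vscal Om (perp o))))) 0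
  = - (g1 * (lam * o1) + g2 * (lam * o2))
    + eps * (2 * (g1 * (o1 + o2) + g2 * (o2 - o1))
      * (lam * (h1 * (o1 + o2) + h2 * (o2 - o1)) + Om * (g1 * (o1 - o2) + g2 * (o1 + o2)))).
Proof.
  intros Hs g1 g2 h1 h2 o1 o2.
  assert (H2 := Hs 2%nat). assert (H3 := Hs 3%nat).
  destruct H3 as [_ [_ [Hd1 Hd2]]].
  apply is_derive_unique.
  destruct p as [p1 p2]; destruct o as [q1 q2].
  unfold Veps, grad, dot, vsub, perp, vadd, vscal. simpl.
  pose proof (line_der psi H2 (p1, p2) (lam * q1, lam * q2)) as A0.
  pose proof (line_der _ Hd1 (p1, p2) (lam * q1, lam * q2)) as A1.
  pose proof (line_der _ Hd2 (p1, p2) (lam * q1, lam * q2)) as A2.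
  simpl in A0, A1, A2.
  assert (B1 : is_derive (fun t => q1 + t * (Om * - q2) - - (q2 + t * (Om * q1))) 0 (Om * - q2 + Om * q1)).
  { apply is_derive_Reals. auto_derive; auto; ring. }
  assert (B2 : is_derive (fun t => q2 + t * (Om * q1) - (q1 + t * (Om * - q2))) 0 (Om * q1 - Om * - q2)).
  { apply is_derive_Reals. auto_derive; auto; ring. }
  assert (G := D_plus _ _ _ _ _ (D_mult _ _ _ _ _ A1 B1) (D_mult _ _ _ _ _ A2 B2)).
  cbv beta in G.
  assert (K := D_plus _ _ _ _ _ (D_minus _ _ _ _ _ (D_const yst 0) A0)
     (is_derive_scal _ _ eps _ (D_mult _ _ _ _ _ G (D_mult _ _ _ _ _ G (D_const 1 0))))).
  cbv beta in K.
  eapply is_derive_val; [exact K|].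
  rewrite ?Rmult_0_l, ?Rplus_0_r.
  unfold g1, g2, h1, h2, o1, o2; simpl.
  assert (E : vadd (p1, p2) (vscal 0 (lam * q1, lam * q2)) = (p1, p2))
    by (unfold vadd, vscal; simpl; f_equal; ring).
  rewrite E. ring.
Qed.

Lemma abs_of_sq a b : 0 <= b -> a * a <= b * b -> Rabs a <= b.
Proof.
  intros Hb H. destruct (Rle_dec 0 a).
  - rewrite Rabs_right by lra. nra.
  - rewrite Rabs_left by lra. nra.
Qed.

Lemma key g1 g2 o1 o2 h1 h2 lam k m M Om c1 eps N :
  o1 * o1 + o2 * o2 = 1 -> 0 <= N -> N * N = g1 * g1 + g2 * g2 ->
  h1 * h1 + h2 * h2 <= c1 * c1 -> 0 < c1 -> 0 < k -> 0 < Om ->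
  lam = k * (g1 * o1 + g2 * o2) + m -> Rabs m <= M -> 0 < eps ->
  4 * eps * c1 <= 1 -> 8 * eps * Om <= k -> 8 * eps * (c1 * c1) * k <= Om ->
  - (g1 * (lam * o1) + g2 * (lam * o2))
    + eps * (2 * (g1 * (o1 + o2) + g2 * (o2 - o1))
      * (lam * (h1 * (o1 + o2) + h2 * (o2 - o1)) + Om * (g1 * (o1 - o2) + g2 * (o1 + o2))))
  <= (2 * M - eps * Om * N) * N.
Proof.
  intros Ho HN0 HN Hh Hc Hk HOm Hlam Hm He E1 E2 E3.
  set (X := g1 * o1 + g2 * o2). set (Z := g2 * o1 - g1 * o2).
  set (Y := g1 * (o1 + o2) + g2 * (o2 - o1)).
  set (W := g1 * (o1 - o2) + g2 * (o1 + o2)).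
  set (Hv := h1 * (o1 + o2) + h2 * (o2 - o1)).
  assert (XZ : X * X + Z * Z = N * N).
  { rewrite HN. unfold X, Z.
    replace ((g1 * o1 + g2 * o2) * (g1 * o1 + g2 * o2) + (g2 * o1 - g1 * o2) * (g2 * o1 - g1 * o2))
      with ((g1 * g1 + g2 * g2) * (o1 * o1 + o2 * o2)) by ring. rewrite Ho. ring. }
  assert (EY : Y = X - Z) by (unfold Y, X, Z; ring).
  assert (EW : W = X + Z) by (unfold W, X, Z; ring).
  assert (HX : Rabs X <= N) by (apply abs_of_sq; [lra|]; assert (0 <= Z * Z) by apply Rle_0_sqr; lra).
  assert (HH2 : Hv * Hv <= 2 * (c1 * c1)).
  { assert (Hv * Hv + (h1 * (o2 - o1) - h2 * (o1 + o2)) * (h1 * (o2 - o1) - h2 * (o1 + o2))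
       = (h1 * h1 + h2 * h2) * (2 * (o1 * o1 + o2 * o2))) by (unfold Hv; ring).
    rewrite Ho in H. assert (0 <= (h1 * (o2 - o1) - h2 * (o1 + o2)) * (h1 * (o2 - o1) - h2 * (o1 + o2))) by apply Rle_0_sqr. lra. }
  assert (HY2 : Y * Y <= 2 * (N * N)).
  { rewrite EY, <- XZ. assert (0 <= (X + Z) * (X + Z)) by apply Rle_0_sqr. lra. }
  assert (HYH : Rabs (Y * Hv) <= 2 * c1 * N).
  { apply abs_of_sq; [nra|].
    replace (Y * Hv * (Y * Hv)) with ((Y * Y) * (Hv * Hv)) by ring.
    apply Rle_trans with ((2 * (N * N)) * (2 * (c1 * c1))); [|nra].
    apply Rmult_le_compat; nra. }
  assert (HM0 : 0 <= M) by (pose proof (Rabs_pos m); lra).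
  assert (Hlab : Rabs lam <= k * Rabs X + M).
  { rewrite Hlam. eapply Rle_trans; [apply Rabs_triang|].
    rewrite Rabs_mult. rewrite (Rabs_right k) by lra. fold X. lra. }
  replace (- (g1 * (lam * o1) + g2 * (lam * o2))) with (- k * (X * X) - m * X)
    by (rewrite Hlam; unfold X; ring).
  fold Y Hv W.
  replace (eps * (2 * Y * (lam * Hv + Om * W)))
     with (2 * eps * (lam * (Y * Hv)) + 2 * eps * Om * (Y * W)) by ring.
  assert (T1 : - (m * X) <= M * N).
  { assert (Rabs (m * X) <= M * N) by (rewrite Rabs_mult; apply Rmult_le_compat; auto using Rabs_pos).
    pose proof (Rle_abs (- (m * X))). rewrite Rabs_Ropp in *. lra. }
  assert (T2 : lam * (Y * Hv) <= (k * Rabs X + M) * (2 * c1 * N)).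
  { eapply Rle_trans; [apply Rle_abs|]. rewrite Rabs_mult.
    apply Rmult_le_compat; auto using Rabs_pos. }
  assert (T3 : Y * W = 2 * (X * X) - N * N) by (rewrite EY, EW; nra).
  rewrite T3.
  set (u := Rabs X) in *.
  assert (Hu : X * X = u * u) by (unfold u; rewrite <- Rabs_mult; rewrite Rabs_right; [reflexivity|]; apply Rle_ge, Rle_0_sqr).
  assert (Hu0 : 0 <= u) by apply Rabs_pos.
  rewrite Hu.
  assert (Q : - k * (u * u) + 4 * eps * Om * (u * u) + 4 * eps * c1 * k * u * N - eps * Om * (N * N) <= 0).
  { assert (- k / 2 * (u * u) + 4 * eps * c1 * k * u * N - eps * Om * (N * N) <= 0).
    { assert (Eq : - k / 2 * (u * u) + 4 * eps * c1 * k * u * N - eps * Om * (N * N)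
        = - (k / 2) * ((u - 4 * eps * c1 * N) * (u - 4 * eps * c1 * N))
          + eps * (N * N) * (8 * eps * (c1 * c1) * k - Om)) by field.
      rewrite Eq.
      assert (0 <= (k / 2) * ((u - 4 * eps * c1 * N) * (u - 4 * eps * c1 * N)))
        by (apply Rmult_le_pos; [lra| apply Rle_0_sqr]).
      assert (0 <= eps * (N * N)) by (apply Rmult_le_pos; [lra| apply Rle_0_sqr]).
      assert (eps * (N * N) * (8 * eps * (c1 * c1) * k - Om) <= 0).
      { rewrite <- (Rmult_0_r (eps * (N * N))). apply Rmult_le_compat_l; lra. }
      lra. }
    assert (0 <= (k / 2 - 4 * eps * Om) * (u * u)) by (apply Rmult_le_pos; [lra| apply Rle_0_sqr]).
    lra. }
  assert (0 <= (1 - 4 * eps * c1) * (M * N)) by (apply Rmult_le_pos; [lra| apply Rmult_le_pos; lra]).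
  assert (T2' : 2 * eps * (lam * (Y * Hv)) <= 2 * eps * ((k * u + M) * (2 * c1 * N)))
    by (apply Rmult_le_compat_l; lra).
  lra.
Qed.

Lemma lt_div_le a b d : 0 < d -> a < b / d -> a * d <= b.
Proof.
  intros Hd H. apply Rlt_le. apply (Rmult_lt_compat_r d) in H; [|exact Hd].
  replace (b / d * d) with b in H by (field; lra). exact H.
Qed.

Theorem lemma2 (psi : R * R -> R) (pst : R * R)
  (Om alpha c : R) (varpi : nat) :
  smooth psi -> conditions psi pst ->
  0 < Om -> 0 < alpha -> 0 < c ->
  exists eps2, 0 < eps2 /\
    forall eps a w p o, 0 < eps -> eps < eps2 -> 0 < a -> in_S1 o ->
      lie (Veps psi (psi pst) eps) (Sigma psi Om alpha c varpi a w) (p, o)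
      <= (2 * a * Rabs (phi psi alpha c varpi a p o) + 2 * Rabs w
          - eps * Om * vnorm (grad psi p)) * vnorm (grad psi p).
Proof.
  intros Hs Hcond HOm Ha Hc.
  destruct Hcond as [_ [_ [_ [[c1 [Hc1 Hop]] _]]]].
  set (k := alpha * c / 2).
  assert (Hk : 0 < k) by (unfold k; apply Rmult_lt_0_compat; [apply Rmult_lt_0_compat|]; lra).
  assert (P1 : 0 < 1 / (4 * c1)) by (apply Rdiv_lt_0_compat; lra).
  assert (P2 : 0 < k / (8 * Om)) by (apply Rdiv_lt_0_compat; lra).
  assert (P3 : 0 < Om / (8 * (c1 * c1) * k)).
  { apply Rdiv_lt_0_compat; [lra|]. apply Rmult_lt_0_compat; [|lra].
    apply Rmult_lt_0_compat; [lra|]. apply Rmult_lt_0_compat; lra. }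
  exists (Rmin (Rmin (1 / (4 * c1)) (k / (8 * Om))) (Om / (8 * (c1 * c1) * k))).
  split; [apply Rmin_pos; [apply Rmin_pos|]; assumption|].
  intros eps a w p o He He2 Ha0 Ho.
  assert (E1 : eps < 1 / (4 * c1))
    by (eapply Rlt_le_trans; [exact He2|]; eapply Rle_trans; apply Rmin_l).
  assert (E2 : eps < k / (8 * Om))
    by (eapply Rlt_le_trans; [exact He2|]; eapply Rle_trans; [apply Rmin_l|apply Rmin_r]).
  assert (E3 : eps < Om / (8 * (c1 * c1) * k))
    by (eapply Rlt_le_trans; [exact He2|]; apply Rmin_r).
  assert (F1 : 4 * eps * c1 <= 1).
  { pose proof (lt_div_le eps 1 (4 * c1) ltac:(lra) E1). lra. }
  assert (F2 : 8 * eps * Om <= k).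
  { pose proof (lt_div_le eps k (8 * Om) ltac:(lra) E2). lra. }
  assert (F3 : 8 * eps * (c1 * c1) * k <= Om).
  { assert (Q : 0 < 8 * (c1 * c1) * k).
    { apply Rmult_lt_0_compat; [|lra]. apply Rmult_lt_0_compat; [lra|]. apply Rmult_lt_0_compat; lra. }
    pose proof (lt_div_le _ _ _ Q E3). lra. }
  set (m := a * phi psi alpha c varpi a p o + w).
  set (lam := alpha * c / 2 * dot (grad psi p) o + a * phi psi alpha c varpi a p o + w).
  cbv beta iota zeta delta [lie Sigma].
  fold lam.
  pose proof (Veps_der psi (psi pst) eps lam Om p o Hs) as E. cbv zeta in E.
  rewrite E. clear E.
  assert (Ho' : fst o * fst o + snd o * snd o = 1) by (unfold in_S1 in Ho; rewrite <- Ho; ring).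
  set (N := vnorm (grad psi p)).
  assert (HN0 : 0 <= N) by (unfold N, vnorm; apply sqrt_pos).
  assert (HN : N * N = Defs.d1 psi p * Defs.d1 psi p + Defs.d2 psi p * Defs.d2 psi p).
  { unfold N, vnorm. rewrite sqrt_sqrt; [unfold dot, grad; simpl; ring|].
    unfold dot, grad; simpl. pose proof (Rle_0_sqr (Defs.d1 psi p)). pose proof (Rle_0_sqr (Defs.d2 psi p)).
    unfold Rsqr in *. lra. }
  assert (Hh : (Defs.d1 (Defs.d1 psi) p * fst o + Defs.d2 (Defs.d1 psi) p * snd o) *
               (Defs.d1 (Defs.d1 psi) p * fst o + Defs.d2 (Defs.d1 psi) p * snd o) +
               (Defs.d1 (Defs.d2 psi) p * fst o + Defs.d2 (Defs.d2 psi) p * snd o) *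
               (Defs.d1 (Defs.d2 psi) p * fst o + Defs.d2 (Defs.d2 psi) p * snd o) <= c1 * c1).
  { assert (Hv : vnorm o <= 1).
    { unfold vnorm, dot. rewrite Ho', sqrt_1. lra. }
    specialize (Hop p o Hv). unfold vnorm, dot, hess in Hop. simpl in Hop.
    match type of Hop with sqrt ?x <= _ =>
      assert (Hx : 0 <= x) by (pose proof (Rle_0_sqr (Defs.d1 (Defs.d1 psi) p * fst o + Defs.d2 (Defs.d1 psi) p * snd o));
                               pose proof (Rle_0_sqr (Defs.d1 (Defs.d2 psi) p * fst o + Defs.d2 (Defs.d2 psi) p * snd o));
                               unfold Rsqr in *; lra);
      rewrite <- (sqrt_sqrt x Hx) end.
    apply Rmult_le_compat; auto using sqrt_pos. }
  assert (Hlam : lam = k * (Defs.d1 psi p * fst o + Defs.d2 psi p * snd o) + m)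
    by (unfold lam, k, m, dot, grad; simpl; ring).
  assert (Hm : Rabs m <= a * Rabs (phi psi alpha c varpi a p o) + Rabs w).
  { unfold m. eapply Rle_trans; [apply Rabs_triang|].
    rewrite Rabs_mult, (Rabs_right a) by lra. lra. }
  eapply Rle_trans.
  { apply (key (Defs.d1 psi p) (Defs.d2 psi p) (fst o) (snd o) _ _ lam k m
      (a * Rabs (phi psi alpha c varpi a p o) + Rabs w) Om c1 eps N); assumption. }
  right. ring.
Qed.
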